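(* Let $\mathcal{P}(\mathcal{G})$ be the pdRCON model represented by the graph $\mathcal{G} = (V, E_{\mathcal{G}}, \mathbb{L}_{\mathcal{G}}, \mathbb{E}_{\mathcal{G}})$. Then the set of pdCGs representing the neighbouring submodels of $\mathcal{P}(\mathcal{G})$, that is the set of graphs $\mathcal{H}\in \mathcal{P}$ that are covered by $\mathcal{G}$ in the model inclusion order ($\mathcal{H} \prec_{s} \mathcal{G}$ with no $\mathcal{F}\in\mathcal{P}$ such that $\mathcal{H}\prec_s\mathcal{F}\prec_s\mathcal{G}$), is made up of: (a) all graphs obtained by merging exactly two vertex atomic colour classes of $\mathcal{G}$ into a vertex twin-pairing class, namely (i) $\mathcal{H}=(V, E_{\mathcal{G}},\mathbb{L}_{\mathcal{G}}\setminus \{i\}, \mathbb{E}_{\mathcal{G}})$ for all $i\in \mathbb{L}_{\mathcal{G}}$; (b) all graphs obtained by merging exactly two edge atomic colour classes of $\mathcal{G}$ into an edge twin-pairing class, namely (ii) $\mathcal{H}=(V, E_{\mathcal{G}}, \mathbb{L}_{\mathcal{G}}, \mathbb{E}_{\mathcal{G}}\setminus \{(i,j)\})$ for all $(i, j)\in \mathbb{E}_{\mathcal{G}}$; (c) all graphs obtained by removing exactly one edge atomic colour class from $\mathcal{G}$, namely (iii) $\mathcal{H}=(V, E_{\mathcal{G}}\setminus\{(i,j)\}, \mathbb{L}_{\mathcal{G}}, \mathbb{E}_{\mathcal{G}} \setminus \{(i,j)\})$ for all $(i,j)\in \mathbb{E}_{\mathcal{G}}$; (iv) $\mathcal{H}=(V,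 E_{\mathcal{G}}\setminus\{\tau(i,j)\}, \mathbb{L}_{\mathcal{G}}, \mathbb{E}_{\mathcal{G}} \setminus \{(i,j)\})$ for all $(i,j)\in \mathbb{E}_{\mathcal{G}}$; (v) $\mathcal{H}=(V, E_{\mathcal{G}}\setminus\{(i,j)\}, \mathbb{L}_{\mathcal{G}}, \mathbb{E}_{\mathcal{G}})$ for all $(i,j)\in E_{\mathcal{G}}$ such that $\tau(i,j)\not\in E_{\mathcal{G}}$; (vi) $\mathcal{H}=(V, E_{\mathcal{G}} \setminus \{(i,\tau(i))\}, \mathbb{L}_{\mathcal{G}}, \mathbb{E}_{\mathcal{G}})$ for all $i\in V$ such that $(i,\tau(i)) \in E_{\mathcal{G}}$; (d) all graphs obtained by removing exactly one edge twin-pairing colour class from $\mathcal{G}$, namely (vii) $\mathcal{H}=(V, E_{\mathcal{G}}\setminus\{(i,j), \tau(i,j)\}, \mathbb{L}_{\mathcal{G}}, \mathbb{E}_{\mathcal{G}})$ for all $(i,j), \tau(i,j) \in E_{\mathcal{G}}$ such that $(i,j)\neq \tau(i,j)$ and both $(i,j)\notin \mathbb{E}_{\mathcal{G}}$ and $\tau(i,j)\notin \mathbb{E}_{\mathcal{G}}$.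
   Context: Let $V=\{1,\dots,p\}$ and let $\tau$ be a twin-pairing function on $V$, i.e. $\tau(i)\in V$ with $\tau(\tau(i))=i$ and $\tau(i)\neq i$; it is extended to edges by $\tau(i,j)=(\tau(i),\tau(j))$ (endpoints reordered so the smaller comes first) and to sets elementwise. Fix a partition $(L,R)$ of $V$ with $\tau(L)=R$, numbered so that $L=\{1,\dots,q\}$, $R=\{q+1,\dots,p\}$. Let $F_V=\{(i,j): i,j\in V, i<j\}$, $F_L=\{(i,j)\in F_V: i<\tau(j)\}$, $F_R=\{(i,j)\in F_V: i>\tau(j)\}$. A coloured graph $\mathcal G=(\mathcal V,\mathcal E)$ consists of a partition $\mathcal V$ of $V$ into vertex colour classes and a partition $\mathcal E$ of an edge set $E\subseteq F_V$ into edge colour classes. It is a coloured graph for paired data (pdCG) if every colour class is either atomic (a single element) or twin-pairing (of the form $\{i,\tau(i)\}$ or $\{(i,j),\tau(i,j)\}$ with $(i,j)\neq\tau(i,j)$). The associated RCON model for paired data (pdRCON model) $\mathcal{P}(\mathcal G)$ is the family of Gaussian distributions whose concentration matrix has zero entries for missing edges and equal entries for vertices (diagonal entries) or edges (off-diagonal entries) in the same colour class; $\mathcal{P}$ denotes the family of all pdCGs on $V$. Every pdCG is equivalently represented by the quadruplet $(V,E,\mathbb L,\mathbb E)$ where $E$ is the union of the edge colour classes, $E_L=E\cap F_L$, $E_R=E\cap F_R$, $\mathbb L=\{i\in L:\{i\}\in\mathcal V\}$ (vertices of $L$ in atomic classes) and $\mathbb E=\{(i,j)\in E_L\cap\tau(E_R):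 \{(i,j)\}\in\mathcal E\}$ (edges of $E_L$ whose twin is present and which, with their twin, form atomic classes). The model inclusion order is $\mathcal H\preceq_s\mathcal G$ iff $\mathcal P(\mathcal H)\subseteq\mathcal P(\mathcal G)$, which holds iff the edge set of $\mathcal H$ is contained in that of $\mathcal G$, every vertex colour class of $\mathcal H$ is a union of vertex colour classes of $\mathcal G$, and every edge colour class of $\mathcal H$ is a union of edge colour classes of $\mathcal G$; $\prec_s$ is its strict version. *)

(* Defs.v *)
From HB Require Import structures.
From mathcomp Require Import all_boot.
Set Implicit Arguments.
Unset Strict Implicit.
Unset Printing Implicit Defensive.

(* Conventions: V = {1,...,p} is represented by 'I_p = {0,...,p-1}
   (shift by one); L = {1,...,q} becomes [set i | i < q]. *)

Section PairedData.
Variables (p : nat) (tau : 'I_p -> 'I_p).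

Definition edge := ('I_p * 'I_p)%type.

Definition tauE (e : edge) : edge :=
  let a := tau e.1 in let b := tau e.2 in
  if (a < b)%N then (a, b) else (b, a).

Definition FV : {set edge} := [set e : edge | (e.1 < e.2)%N].
Definition FL : {set edge} := [set e in FV | (e.1 < tau e.2)%N].
Definition FR : {set edge} := [set e in FV | (tau e.2 < e.1)%N].

(* a coloured graph: vertex colour classes and edge colour classes;
   the edge set E is the union of the edge colour classes *)
Record cgraph := CGraph {
  vcl : {set {set 'I_p}};
  ecl : {set {set edge}} }.

Definition Eset (G : cgraph) : {set edge} := cover (ecl G).

Definition is_pdCG (G : cgraph) : Prop :=
  [/\ partition (vcl G) [set: 'I_p],
      partition (ecl G) (Eset G),
      Eset G \subset FV,
      (forall C, C \in vcl G ->
         (exists i, C = [set i]) \/ (exists i, C = [set i; tau i]))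
    & (forall C, C \in ecl G ->
         (exists e, C = [set e]) \/
         (exists e, e != tauE e /\ C = [set e; tauE e]))].

Definition union_of (T : finType) (P : {set {set T}}) (C : {set T}) : Prop :=
  exists2 S : {set {set T}}, S \subset P & C = cover S.

(* model inclusion order H <=_s G  (P(H) subset of P(G)) *)
Definition sub_model (H G : cgraph) : Prop :=
  [/\ Eset H \subset Eset G,
      (forall C, C \in vcl H -> union_of (vcl G) C)
    & (forall C, C \in ecl H -> union_of (ecl G) C)].

Definition ssub_model (H G : cgraph) : Prop :=
  sub_model H G /\ ~ sub_model G H.

Definition covered (H G : cgraph) : Prop :=
  ssub_model H G /\
  ~ (exists F, is_pdCG F /\ ssub_model H F /\ ssub_model F G).

(* quadruplet representation (E, LL, EE) (V is implicit) *)
Definition quadruplet := ({set edge} * {set 'I_p} * {set edge})%type.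

Definition quad (q : nat) (G : cgraph) : quadruplet :=
  let E := Eset G in
  let EL := E :&: FL in
  let ER := E :&: FR in
  (E,
   [set i : 'I_p | (i < q)%N && ([set i] \in vcl G)],
   [set e in EL :&: (tauE @: ER) | [set e] \in ecl G]).

(* the quadruplets (i)-(vii) of Proposition 8, built from the
   quadruplet (E, LL, EE) of G *)
Definition neighbour_quad (Q QG : quadruplet) : Prop :=
  let: (E, LL, EE) := QG in
  (exists2 i, i \in LL & Q = (E, LL :\ i, EE)) \/
  (exists2 e, e \in EE & Q = (E, LL, EE :\ e)) \/
  (exists2 e, e \in EE & Q = (E :\ e, LL, EE :\ e)) \/
  (exists2 e, e \in EE & Q = (E :\ tauE e, LL, EE :\ e)) \/
  (exists2 e, (e \in E) && (tauE e \notin E) & Q = (E :\ e, LL, EE)) \/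
  (exists2 i, (i, tau i) \in E & Q = (E :\ (i, tau i), LL, EE)) \/
  (exists2 e, [&& e \in E, tauE e \in E, e != tauE e,
                  e \notin EE & tauE e \notin EE]
            & Q = (E :\: [set e; tauE e], LL, EE)).

End PairedData.

(* Main.v *)
Require Import Defs.
From HB Require Import structures.
From mathcomp Require Import all_boot zify.
Set Implicit Arguments. Unset Strict Implicit. Unset Printing Implicit Defensive.

Section S.
Variables (p q : nat) (tau : 'I_p -> 'I_p).
Hypothesis tau_inv : forall i, tau (tau i) = i.
Hypothesis tau_nofix : forall i, tau i != i.
Hypothesis tau_LR : tau @: [set i : 'I_p | (i < q)%N] = [set i : 'I_p | (q <= i)%N].

Lemma tau_inj : injective tau. Proof. exact: can_inj tau_inv. Qed.

Lemma LRq i : (tau i < q) = (q <= i).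
Proof.
case: (ltnP i q) => hi.
- have : tau i \in tau @: [set i : 'I_p | (i < q)%N] by apply: imset_f; rewrite inE.
  by rewrite tau_LR inE leqNgt => /negbTE.
- have : i \in [set i : 'I_p | (q <= i)%N] by rewrite inE.
  rewrite -tau_LR => /imsetP [j]; rewrite inE => hj ->. by rewrite tau_inv.
Qed.

Lemma natneq (a b : 'I_p) : a != b -> (a : nat) <> b.
Proof. by move=> /eqP h h'; apply: h; apply: val_inj. Qed.

Lemma tauE_FV e : e \in FV p -> tauE tau e \in FV p.
Proof.
case: e => i j; rewrite /tauE inE /= => hij.
have hn : tau i != tau j.
  by apply/eqP => /tau_inj h; move: hij; rewrite h ltnn.
have := natneq hn.
case: ltnP => h1 h2; rewrite inE /=; lia.
Qed.

Lemma tauEK e : e \in FV p -> tauE tau (tauE tau e) = e.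
Proof.
case: e => i j; rewrite /tauE inE /= => hij.
case: (ltnP (tau i) (tau j)) => h0 /=; rewrite !tau_inv ?hij //.
by rewrite ltnNge (ltnW hij).
Qed.

Lemma tau_eqn (i j : 'I_p) : (tau i = j :> nat) -> (tau j = i :> nat).
Proof. move=> h; have h1 : tau i = j by apply: val_inj. by rewrite -h1 tau_inv. Qed.

Lemma FL_FR e : e \in FV p -> (e \in FL tau) = (tauE tau e \in FR tau).
Proof.
case: e => i j; rewrite /tauE inE /= => hij.
have hn : tau i != tau j.
  by apply/eqP => /tau_inj h; move: hij; rewrite h ltnn.
have := natneq hn.
have := LRq i; have := LRq j; have := LRq (tau i); have := LRq (tau j).
rewrite !tau_inv.
have e1 := @tau_eqn i j. have e2 := @tau_eqn j i.
have n1 := natneq (tau_nofix i). have n2 := natneq (tau_nofix j).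
case: (ltnP (tau i) (tau j)) => h1; rewrite !inE /= ?tau_inv hij /=;
 move=> a b c d h; apply/idP/idP; move=> h3; lia.
Qed.

Lemma FLFR_fix e : e \in FV p -> e \notin FL tau -> e \notin FR tau -> tauE tau e = e.
Proof.
case: e => i j; rewrite !inE /= => hij; rewrite hij /= -!leqNgt => h1 h2.
have h : tau j = i by apply: val_inj; apply/eqP; rewrite eqn_leq h1 h2.
have hi : tau i = j by rewrite -h tau_inv.
by rewrite /tauE /= h hi ltnNge (ltnW hij).
Qed.

Local Notation tE := (tauE tau).
Local Notation edg := (edge p).

Lemma part_eq (T : finType) (P : {set {set T}}) D C1 C2 x :
  partition P D -> C1 \in P -> C2 \in P -> x \in C1 -> x \in C2 -> C1 = C2.
Proof.
move=> /partition_trivIset tI h1 h2 x1 x2.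
by rewrite -(def_pblock tI h1 x1) (def_pblock tI h2 x2).
Qed.

Lemma part_cover (T : finType) (P : {set {set T}}) D x :
  partition P D -> x \in D -> exists2 C, C \in P & x \in C.
Proof.
by move=> /cover_partition <- /bigcupP [C h1 h2]; exists C.
Qed.

Lemma cover_sub (T : finType) (P : {set {set T}}) C :
  C \in P -> C \subset cover P.
Proof. by move=> h; apply: bigcup_sup. Qed.

Lemma union_intro (T : finType) (P : {set {set T}}) (C : {set T}) :
  (forall x, x \in C -> exists2 D, D \in P & x \in D /\ D \subset C) ->
  union_of P C.
Proof.
move=> h; exists [set D in P | D \subset C].
  by apply/subsetP => D; rewrite inE => /andP [].
apply/setP => x; apply/idP/bigcupP.
  by move=> /h [D hD [hx hs]]; exists D => //; rewrite inE hD hs.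
by move=> [D]; rewrite inE => /andP [_ /subsetP]; apply.
Qed.

Lemma union_single (T : finType) (P : {set {set T}}) x :
  union_of P [set x] -> [set x] \in P.
Proof.
move=> [S hS hc].
have : x \in cover S by rewrite -hc set11.
move=> /bigcupP [D hD hx].
have hDs : D \subset [set x] by rewrite hc; apply: bigcup_sup.
suff -> : [set x] = D by apply: (subsetP hS).
apply/eqP; rewrite eqEsubset hDs andbT sub1set //.
Qed.

Definition cA (G : cgraph p) := [set i | [set i] \in vcl G].
Definition cAt (G : cgraph p) := [set e | [set e] \in ecl G].

Definition valid (E : {set edg}) (A : {set 'I_p}) (At : {set edg}) : Prop :=
 [/\ E \subset FV p, At \subset E, (forall i, i \in A -> tau i \in A) &
   (forall e, e \in E -> e \notin At -> [/\ tE e \in E, tE e \notin At & tE e != e])].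

Section PD.
Variable G : cgraph p.
Hypothesis HG : is_pdCG tau G.

Lemma vA1 i : i \notin cA G -> [set i; tau i] \in vcl G.
Proof.
case: HG => hv _ _ hvc _.
rewrite inE => hi.
have [C hC iC] := part_cover hv (in_setT i).
case: (hvc C hC) => [[j hj]|[j hj]].
  move: iC; rewrite hj inE => /eqP hij.
  by move: hi; rewrite hij -hj hC.
move: iC; rewrite hj !inE => /orP [] /eqP hij.
  by rewrite hij -hj.
have -> : [set i; tau i] = C by rewrite hj hij tau_inv setUC.
exact: hC.
Qed.

Lemma vA2 i : i \in cA G -> tau i \in cA G.
Proof.
move=> hi; apply/negP => /negP /vA1; rewrite tau_inv => h2.
case: HG => hv _ _ _ _.
move: hi; rewrite inE => h1.
have i2 : i \in [set tau i; i] by rewrite !inE eqxx orbT.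
have h := part_eq hv h1 h2 (set11 i) i2.
have : tau i \in [set i] by rewrite h !inE eqxx.
by rewrite inE (negbTE (tau_nofix i)).
Qed.

Lemma eA1 e : e \in Eset G -> e \notin cAt G ->
  [set e; tE e] \in ecl G /\ tE e != e.
Proof.
case: HG => _ he hFV _ hec.
move=> eE; rewrite inE => ha.
have [C hC eC] := part_cover he eE.
case: (hec C hC) => [[x hx]|[x [hx1 hx2]]].
  move: eC; rewrite hx inE => /eqP hex.
  by move: ha; rewrite hex -hx hC.
move: eC; rewrite hx2 !inE => /orP [] /eqP hex.
  by rewrite hex -hx2 hC eq_sym.
have xE : x \in Eset G by apply: (subsetP (cover_sub hC)); rewrite hx2 !inE eqxx.
have xFV : x \in FV p := subsetP hFV x xE.
have hx : tE e = x by rewrite hex tauEK.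
by rewrite hx hex setUC -hx2; split.
Qed.

Lemma pd_valid : valid (Eset G) (cA G) (cAt G).
Proof.
have HG' := HG; case: HG' => _ he hFV _ hec.
split => //.
- by apply/subsetP => e; rewrite inE => h; apply: (subsetP (cover_sub h)); rewrite inE.
- exact: vA2.
move=> e eE ea.
have [h1 h2] := eA1 eE ea.
have tE_E : tE e \in Eset G by apply: (subsetP (cover_sub h1)); rewrite !inE eqxx orbT.
split => //.
rewrite inE; apply/negP => h3.
have i2 : tE e \in [set e; tE e] by rewrite !inE eqxx orbT.
have h := part_eq he h1 h3 i2 (set11 _).
have : e \in [set tE e] by rewrite -h !inE eqxx.
by rewrite inE eq_sym (negbTE h2).
Qed.

End PD.

Lemma sub_model_iff (H G : cgraph p) : is_pdCG tau H -> is_pdCG tau G ->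
  (sub_model H G <-> [/\ Eset H \subset Eset G, cA H \subset cA G & cAt H \subset cAt G]).
Proof.
move=> hH hG; split.
  case=> hE hv he; split => //.
    by apply/subsetP => i; rewrite !inE => /hv /union_single.
  by apply/subsetP => i; rewrite !inE => /he /union_single.
case=> hE hA hAt; split => //.
  move=> C hC; apply: union_intro => x xC.
  case: (boolP (x \in cA G)) => xa.
    exists [set x]; first by rewrite inE in xa.
    by split; rewrite ?set11 // sub1set.
  exists [set x; tau x]; first exact: vA1.
  split; first by rewrite !inE eqxx.
  case: hH => _ _ _ hvc _.
  case: (hvc C hC) => [[j hj]|[j hj]].
    move: xC; rewrite hj inE => /eqP hxj.
    have : x \in cA H by rewrite inE hxj -hj.
    by move/(subsetP hA); rewrite (negbTE xa).
  move: xC; rewrite hj !inE => /orP [] /eqP ->.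
    by apply/subsetP => y; rewrite !inE.
  by rewrite tau_inv; apply/subsetP => y; rewrite !inE orbC.
move=> C hC; apply: union_intro => x xC.
have xE : x \in Eset G by apply: (subsetP hE); apply: (subsetP (cover_sub hC)).
case: (boolP (x \in cAt G)) => xa.
  exists [set x]; first by rewrite inE in xa.
  by split; rewrite ?set11 // sub1set.
have [h1 h2] := eA1 hG xE xa.
exists [set x; tE x] => //.
split; first by rewrite !inE eqxx.
case: hH => _ _ hFV _ hec.
case: (hec C hC) => [[j hj]|[j [hj1 hj]]].
  move: xC; rewrite hj inE => /eqP hxj.
  have : x \in cAt H by rewrite inE hxj -hj.
  by move/(subsetP hAt); rewrite (negbTE xa).
have jFV : j \in FV p by apply: (subsetP hFV); apply: (subsetP (cover_sub hC)); rewrite hj !inE eqxx.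
move: xC; rewrite hj !inE => /orP [] /eqP ->.
  by apply/subsetP => y; rewrite !inE.
by rewrite tauEK //; apply/subsetP => y; rewrite !inE orbC.
Qed.


Lemma part_cls (T : finType) (D : {set T}) (f : T -> {set T}) :
  (forall x, x \in D -> x \in f x) ->
  (forall x y, x \in D -> y \in f x -> f y = f x) ->
  (forall x, x \in D -> f x \subset D) -> partition (f @: D) D.
Proof.
move=> h1 h2 h3; apply/and3P; split.
- apply/eqP/setP => y; apply/bigcupP/idP.
    by move=> [C /imsetP [x hx ->] hy]; apply: (subsetP (h3 x hx)).
  by move=> hy; exists (f y); [apply: imset_f | apply: h1].
- apply/trivIsetP => C1 C2 /imsetP [x hx ->] /imsetP [y hy ->] hne.
  rewrite -setI_eq0; apply/eqP/setP => z; rewrite !inE; apply/negP => /andP [zx zy].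
  by move: hne; rewrite -(h2 x z hx zx) -(h2 y z hy zy) eqxx.
- apply/negP => /imsetP [x hx h].
  by have := h1 x hx; rewrite -h inE.
Qed.

Definition vcls (A : {set 'I_p}) i := if i \in A then [set i] else [set i; tau i].
Definition ecls (At : {set edg}) e := if e \in At then [set e] else [set e; tE e].

Lemma realize E A At : valid E A At ->
  exists F : cgraph p, [/\ is_pdCG tau F, Eset F = E, cA F = A & cAt F = At].
Proof.
case=> hFV hAt hA hE.
have pv : partition (vcls A @: [set: 'I_p]) [set: 'I_p].
  apply: part_cls => //.
  - by move=> x _; rewrite /vcls; case: ifP; rewrite !inE eqxx.
  move=> x y _; rewrite /vcls; case: ifP => xa.
    by rewrite inE => /eqP ->; rewrite xa.
  rewrite !inE => /orP [] /eqP ->; first by rewrite xa.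
  have -> : (tau x \in A) = false.
    by apply/negP => /hA; rewrite tau_inv xa.
  by rewrite tau_inv setUC.
have pe : partition (ecls At @: E) E.
  apply: part_cls.
  - by move=> x _; rewrite /ecls; case: ifP; rewrite !inE eqxx.
  - move=> x y xE; rewrite /ecls; case: ifP => xa.
      by rewrite inE => /eqP ->; rewrite xa.
    have [h1 h2 h3] := hE x xE (negbT xa).
    rewrite !inE => /orP [] /eqP ->; first by rewrite xa.
    by rewrite (negbTE h2) tauEK ?(subsetP hFV) // setUC.
  - move=> x xE; rewrite /ecls; case: ifP => xa; first by rewrite sub1set.
    have [h1 h2 h3] := hE x xE (negbT xa).
    by apply/subsetP => y; rewrite !inE => /orP [] /eqP ->.
have cE : Eset (CGraph (vcls A @: [set: 'I_p]) (ecls At @: E)) = E.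
  exact: cover_partition pe.
exists (CGraph (vcls A @: [set: 'I_p]) (ecls At @: E)); split => //.
- split => //=; first by rewrite cE.
  + by rewrite cE.
  + move=> C /imsetP [i _ ->]; rewrite /vcls; case: ifP => _.
      by left; exists i.
    by right; exists i.
  + move=> C /imsetP [e eE ->]; rewrite /ecls; case: ifP => ea.
      by left; exists e.
    have [h1 h2 h3] := hE e eE (negbT ea).
    by right; exists e; rewrite eq_sym.
- apply/setP => i; rewrite !inE /=; apply/imsetP/idP.
    move=> [j _]; rewrite /vcls; case: ifP => ja h.
      by move/set1_inj: h => ->.
    have : j \in [set i] by rewrite h !inE eqxx.
    have : tau j \in [set i] by rewrite h !inE eqxx orbT.
    rewrite !inE => /eqP e1 /eqP e2.
    by move: (tau_nofix j); rewrite e1 e2 eqxx.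
  by move=> ia; exists i; rewrite /vcls ?ia ?inE.
- apply/setP => e; rewrite !inE /=; apply/imsetP/idP.
    move=> [x xE]; rewrite /ecls; case: ifP => xa h.
      by move/set1_inj: h => ->.
    have [h1 h2 h3] := hE x xE (negbT xa).
    have : x \in [set e] by rewrite h !inE eqxx.
    have : tE x \in [set e] by rewrite h !inE eqxx orbT.
    rewrite !inE => /eqP e1 /eqP e2.
    by move: h3; rewrite e1 e2 eqxx.
  by move=> ea; exists e; [apply: (subsetP hAt) | rewrite /ecls ea].
Qed.


Definition validT (t : quadruplet p) := valid t.1.1 t.1.2 t.2.
Definition leT (t1 t2 : quadruplet p) :=
  [/\ t1.1.1 \subset t2.1.1, t1.1.2 \subset t2.1.2 & t1.2 \subset t2.2].

Definition stepT (E : {set edg}) (A : {set 'I_p}) (At : {set edg}) (tH : quadruplet p) : Prop :=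
 (exists2 i, i \in A & tH = (E, A :\: [set i; tau i], At)) \/
 (exists2 e, (e \in At) && (tE e \notin E :\: At) & tH = (E :\ e, A, At :\ e)) \/
 (exists2 e, e \in E :\: At & tH = (E :\: [set e; tE e], A, At)) \/
 (exists2 e, [&& e \in At, tE e \in At & tE e != e] & tH = (E, A, At :\: [set e; tE e])).

Lemma leT_anti t1 t2 : leT t1 t2 -> leT t2 t1 -> t1 = t2.
Proof.
case: t1 t2 => [[E1 A1] At1] [[E2 A2] At2] [/= h1 h2 h3] [/= h4 h5 h6].
by congr (_, _, _); apply/eqP; rewrite eqEsubset ?h1 ?h2 ?h3 ?h4 ?h5 ?h6.
Qed.

Lemma tau_in2 (A : {set 'I_p}) i j : (tau j \in [set i; tau i]) = (j \in [set i; tau i]).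
Proof.
rewrite !inE; apply/idP/idP => /orP [] /eqP h.
- by rewrite -h tau_inv eqxx orbT.
- by rewrite (tau_inj h) eqxx.
- by rewrite h eqxx orbT.
- by rewrite h tau_inv eqxx.
Qed.

Lemma tE_in2 (E : {set edg}) e x : E \subset FV p -> e \in E -> x \in E ->
  (tE x \in [set e; tE e]) = (x \in [set e; tE e]).
Proof.
move=> hF eE xE.
have eF := subsetP hF e eE. have xF := subsetP hF x xE.
rewrite !inE; apply/idP/idP => /orP [] /eqP h.
- by rewrite -h tauEK ?eqxx ?orbT.
- by rewrite -(tauEK xF) h tauEK ?eqxx.
- by rewrite h eqxx orbT.
- by rewrite h tauEK ?eqxx.
Qed.

Lemma step_valid E A At F : valid E A At -> stepT E A At F ->
  [/\ validT F, leT F (E, A, At) & F != (E, A, At)].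
Proof.
move=> hv; have hv' := hv; case: hv' => hF hAt hA hE.
case=> [[i ia ->]|[[e /andP [ea te] ->]|[[e /setDP [eE ea] ->]|[e /and3P [ea tea tee] ->]]]].
- split; rewrite /validT /leT /=.
  + split => // j; rewrite !inE => /andP [hj ja]; rewrite hA // andbT.
    by have := tau_in2 A i j; rewrite !inE => ->.
  + by split => //; apply: subsetDl.
  + apply/eqP => [[h]]; have : i \in A :\: [set i; tau i] by rewrite h.
    by rewrite !inE eqxx.
- have eE := subsetP hAt e ea.
  split; rewrite /validT /leT /=.
  + split.
    * exact: subset_trans (subsetDl _ _) hF.
    * by apply/subsetP => x; rewrite !inE => /andP [-> /(subsetP hAt) ->].
    * exact: hA.
    * move=> x; rewrite !inE => /andP [xe xE] /nandP [/negPn xe'|xa]; first by rewrite xe' in xe.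
      have [h1 h2 h3] := hE x xE xa.
      rewrite h1 h3 (negbTE h2) andbF; split => //; rewrite andbT; apply/eqP => h; move: h2; rewrite h ea //.
  + by split => //; apply: subsetDl.
  + apply/eqP => [[h _]]; have : e \in E :\ e by rewrite h.
    by rewrite !inE eqxx.
- have eF := subsetP hF e eE.
  have [h1 h2 h3] := hE e eE ea.
  split; rewrite /validT /leT /=.
  + split => //.
    * exact: subset_trans (subsetDl _ _) hF.
    * apply/subsetP => x xa; rewrite !inE (subsetP hAt x xa) andbT.
      by apply/negP => /orP [] /eqP h; move: xa; rewrite h; [rewrite (negbTE ea) | rewrite (negbTE h2)].
    * move=> x; rewrite inE => /andP [xe xE] xa.
      have [k1 k2 k3] := hE x xE xa.
      by rewrite inE k1 andbT (tE_in2 hF eE xE); split.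
  + by split => //; apply: subsetDl.
  + apply/eqP => [[h]]; have : e \in E :\: [set e; tE e] by rewrite h.
    by rewrite !inE eqxx.
- have eE := subsetP hAt e ea.
  have eF := subsetP hF e eE.
  have teE := subsetP hAt _ tea.
  split; rewrite /validT /leT /=.
  + split => //.
    * exact: subset_trans (subsetDl _ _) hAt.
    * move=> x xE; rewrite inE negb_and negbK => /orP [xin|xa].
      - have xF := subsetP hF x xE.
        rewrite inE (tE_in2 hF eE xE) xin /=.
        move: xin; rewrite !inE => /orP [] /eqP ->.
          by split.
        by rewrite tauEK //; split => //; rewrite eq_sym.
      - have [k1 k2 k3] := hE x xE xa.
        by rewrite inE k1 (negbTE k2) andbF; split.
  + by split => //; apply: subsetDl.
  + apply/eqP => [[h]]; have : e \in At :\: [set e; tE e] by rewrite h.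
    by rewrite !inE eqxx.
Qed.


Lemma step_between E A At F K : valid E A At -> stepT E A At F -> validT K ->
  leT F K -> leT K (E, A, At) -> K = F \/ K = (E, A, At).
Proof.
move=> hv; have hv' := hv; case: hv' => hF hAt hA hE.
case: K => [[EK AK] AtK] hst [/= hFK hAtK hAK hEK].
case: hst => [[i ia ->]|[[e /andP [ea te] ->]|[[e /setDP [eE ea] ->]|[e /and3P [ea tea tee] ->]]]].
- case=> /= s1 s2 s3 [/= s4 s5 s6].
  have eqEK : EK = E by apply/eqP; rewrite eqEsubset s1 s4.
  subst EK.
  have eqAtK : AtK = At by apply/eqP; rewrite eqEsubset s3 s6.
  subst AtK.
  case: (boolP (i \in AK)) => iK.
    right; congr (_, _, _); apply/eqP; rewrite eqEsubset s5 /=.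
    apply/subsetP => x xa; case: (boolP (x \in [set i; tau i])).
      by rewrite !inE => /orP [] /eqP ->; [|apply: hAK].
    by move=> xn; apply: (subsetP s2); rewrite inE xn xa.
  left; congr (_, _, _); apply/eqP; rewrite eqEsubset s2 andbT.
  apply/subsetP => x xK; rewrite inE (subsetP s5 x xK) andbT.
  rewrite !inE; apply/negP => /orP [] /eqP hx.
    by move: iK; rewrite -hx xK.
  by move: iK; rewrite -(tau_inv i) -hx (hAK _ xK).
- have eE := subsetP hAt e ea.
  case=> /= s1 s2 s3 [/= s4 s5 s6].
  have eqAK : AK = A by apply/eqP; rewrite eqEsubset s2 s5.
  subst AK.
  case: (boolP (e \in EK)) => eK.
    have eaK : e \in AtK.
      apply/negPn/negP => na.
      have [k1 k2 k3] := hEK e eK na.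
      have : tE e \in At.
        apply: contraR te => na2; rewrite inE na2 (subsetP s4 _ k1) //.
      move=> ta; move: k2; rewrite (subsetP s3) //.
      by rewrite !inE ta k3.
    right; congr (_, _, _); apply/eqP.
      rewrite eqEsubset s4 /=; apply/subsetP => x xE.
      case: (eqVneq x e) => [->//|xe]; apply: (subsetP s1); by rewrite !inE xe.
    rewrite eqEsubset s6 /=; apply/subsetP => x xa.
    case: (eqVneq x e) => [->//|xe]; apply: (subsetP s3); by rewrite !inE xe.
  left; congr (_, _, _); apply/eqP.
    rewrite eqEsubset s1 andbT; apply/subsetP => x xK.
    by rewrite !inE (subsetP s4 x xK) andbT; apply/eqP => h; move: eK; rewrite -h xK.
  rewrite eqEsubset s3 andbT; apply/subsetP => x xK.
  rewrite !inE (subsetP s6 x xK) andbT; apply/eqP => h.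
  by move: eK; rewrite -h (subsetP hAtK x xK).
- have eF := subsetP hF e eE.
  have [h1 h2 h3] := hE e eE ea.
  case=> /= s1 s2 s3 [/= s4 s5 s6].
  have eqAK : AK = A by apply/eqP; rewrite eqEsubset s2 s5.
  subst AK.
  have eqAtK : AtK = At by apply/eqP; rewrite eqEsubset s3 s6.
  subst AtK.
  case: (boolP ((e \in EK) || (tE e \in EK))) => hK.
    have [eK teK] : e \in EK /\ tE e \in EK.
      case/orP: hK => hK.
        have [k1 _ _] := hEK e hK ea; by [].
      have [k1 _ _] := hEK _ hK h2; by move: k1; rewrite tauEK.
    right; congr (_, _, _); apply/eqP; rewrite eqEsubset s4 /=.
    apply/subsetP => x xE; case: (boolP (x \in [set e; tE e])).
      by rewrite !inE => /orP [] /eqP ->.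
    by move=> xn; apply: (subsetP s1); rewrite inE xn xE.
  left; congr (_, _, _); apply/eqP; rewrite eqEsubset s1 andbT.
  apply/subsetP => x xK; rewrite inE (subsetP s4 x xK) andbT.
  rewrite !inE; apply/negP => /orP [] /eqP hx; move: hK; by rewrite -hx xK ?orbT.
- have eE := subsetP hAt e ea.
  have teE := subsetP hAt _ tea.
  have eF := subsetP hF e eE.
  case=> /= s1 s2 s3 [/= s4 s5 s6].
  have eqAK : AK = A by apply/eqP; rewrite eqEsubset s2 s5.
  subst AK.
  have eqEK : EK = E by apply/eqP; rewrite eqEsubset s1 s4.
  subst EK.
  case: (boolP ((e \in AtK) || (tE e \in AtK))) => hK.
    have [eK teK] : e \in AtK /\ tE e \in AtK.
      have bothK : forall x, x \in [set e; tE e] -> x \in AtK -> tE x \in AtK.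
        move=> x xin xK; apply/negPn/negP => nK.
        have txE : tE x \in E by move: xin; rewrite !inE => /orP [] /eqP ->; rewrite ?tauEK ?teE ?eE.
        have xF : x \in FV p by move: xin; rewrite in_set2 => /orP [] /eqP ->; [exact: eF | exact: tauE_FV].
        have [k1 k2 _] := hEK _ txE nK.
        by move: k2; rewrite tauEK // xK.
      case/orP: hK => hK.
        by split => //; apply: bothK; rewrite ?inE ?eqxx.
      by split => //; rewrite -(tauEK eF); apply: bothK; rewrite ?inE ?eqxx ?orbT.
    right; congr (_, _, _); apply/eqP; rewrite eqEsubset s6 /=.
    apply/subsetP => x xE; case: (boolP (x \in [set e; tE e])).
      by rewrite !inE => /orP [] /eqP ->.
    by move=> xn; apply: (subsetP s3); rewrite inE xn xE.
  left; congr (_, _, _); apply/eqP; rewrite eqEsubset s3 andbT.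
  apply/subsetP => x xK; rewrite inE (subsetP s6 x xK) andbT.
  rewrite !inE; apply/negP => /orP [] /eqP hx; move: hK; by rewrite -hx xK ?orbT.
Qed.


Lemma step_exists E A At H : valid E A At -> validT H -> leT H (E, A, At) ->
  H != (E, A, At) -> exists F, stepT E A At F /\ leT H F.
Proof.
move=> hv; have hv' := hv; case: hv' => hF hAt hA hE.
case: H => [[EH AH] AtH] [/= hFH hAtH hAH hEH] [/= s1 s2 s3] hne.
case: (boolP (A \subset AH)) => sA; last first.
  have [i ia iH] := subsetPn sA.
  exists (E, A :\: [set i; tau i], At); split; first by left; exists i.
  split => //=; apply/subsetP => x xH; rewrite inE (subsetP s2 x xH) andbT.
  rewrite !inE; apply/negP => /orP [] /eqP hx.
    by move: iH; rewrite -hx xH.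
  by move: iH; rewrite -(tau_inv i) -hx (hAH _ xH).
have eA : AH = A by apply/eqP; rewrite eqEsubset s2 sA.
subst AH.
case: (boolP (E \subset EH)) => sE; last first.
  have [e eE eH] := subsetPn sE.
  have eF := subsetP hF e eE.
  case: (boolP ((e \in At) && (tE e \notin E :\: At))) => hc.
    exists (E :\ e, A, At :\ e); split; first by right; left; exists e.
    split => //=; apply/subsetP => x xH; rewrite !inE.
      rewrite (subsetP s1 x xH) andbT; apply/eqP => h; by move: eH; rewrite -h xH.
    rewrite (subsetP s3 x xH) andbT; apply/eqP => h; by move: eH; rewrite -h (subsetP hAtH x xH).
  have ea : e \notin At.
    apply/negP => ea; move: hc; rewrite ea /= negbK => /setDP [k1 k2].
    by have [_ ] := hE _ k1 k2; rewrite tauEK // ea.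
  have [h1 h2 h3] := hE e eE ea.
  exists (E :\: [set e; tE e], A, At); split.
    by right; right; left; exists e => //; rewrite inE ea eE.
  split => //=; apply/subsetP => x xH; rewrite inE (subsetP s1 x xH) andbT.
  rewrite in_set2; apply/negP => /orP [] /eqP hx.
    by move: eH; rewrite -hx xH.
  case: (boolP (x \in AtH)) => xa.
    by move: h2; rewrite -hx (subsetP s3 x xa).
  have [k1 _ _] := hEH x xH xa.
  by move: eH; rewrite -(tauEK eF) -hx k1.
have eE : EH = E by apply/eqP; rewrite eqEsubset s1 sE.
subst EH.
case: (boolP (At \subset AtH)) => sAt.
  by case/eqP: hne; congr (_, _, _); apply/eqP; rewrite eqEsubset s3 sAt.
have [e ea eH] := subsetPn sAt.
have eE := subsetP hAt e ea.
have eF := subsetP hF e eE.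
have [k1 k2 k3] := hEH e eE eH.
have tea : tE e \in At.
  apply/negPn/negP => na.
  by have [_ ] := hE _ k1 na; rewrite tauEK // ea.
exists (E, A, At :\: [set e; tE e]); split.
  by right; right; right; exists e => //; rewrite ea tea k3.
split => //=; apply/subsetP => x xH; rewrite inE (subsetP s3 x xH) andbT.
rewrite in_set2; apply/negP => /orP [] /eqP hx.
  by move: eH; rewrite -hx xH.
by move: k2; rewrite -hx xH.
Qed.


Definition EEf (E At : {set edg}) :=
  [set e in (E :&: FL tau) :&: (tE @: (E :&: FR tau)) | e \in At].
Definition quadT (t : quadruplet p) : quadruplet p :=
  (t.1.1, [set i : 'I_p | (i < q) && (i \in t.1.2)], EEf t.1.1 t.2).

Lemma quad_trip G : quad tau q G = quadT (Eset G, cA G, cAt G).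
Proof. by rewrite /quad /quadT /=; congr (_, _, _); apply/setP => x; rewrite !inE. Qed.

Lemma FL_FV e : e \in FL tau -> e \in FV p.
Proof. by rewrite inE => /andP []. Qed.

Lemma FR_FV e : e \in FR tau -> e \in FV p.
Proof. by rewrite inE => /andP []. Qed.

Lemma FL_tE e : e \in FL tau -> tE e \notin FL tau.
Proof.
move=> h; have eF := FL_FV h.
move: (h); rewrite FL_FR // => h2.
move: h2; rewrite !inE => /andP [_ h2]; apply/negP => /andP [_ h3].
by move: h2; rewrite ltnNge ltnW.
Qed.

Lemma FL_or e : e \in FV p -> tE e != e -> (e \in FL tau) || (tE e \in FL tau).
Proof.
move=> eF hne; case: (boolP (e \in FL tau)) => //= h1.
rewrite FL_FR ?tauE_FV // tauEK //.
apply/negPn/negP => h2; move: hne; by rewrite FLFR_fix ?eqxx.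
Qed.

Lemma tE_eq x e : x \in FV p -> e \in FV p -> (tE x == e) = (x == tE e).
Proof.
move=> xF eF; apply/eqP/eqP => h.
  by rewrite -h tauEK.
by rewrite h tauEK.
Qed.

Lemma tE_pair i : (i, tau i) \in FV p -> tE (i, tau i) = (i, tau i).
Proof.
rewrite inE /= => h; rewrite /tauE /= tau_inv.
by rewrite ltnNge (ltnW h).
Qed.

Lemma tE_fix e : e \in FV p -> tE e = e -> e = (e.1, tau e.1).
Proof.
case: e => i j; rewrite /tauE /=; case: ltnP => _ _ [h1 h2].
  by move: (tau_nofix i); rewrite h1 eqxx.
by rewrite h2.
Qed.

Section V.
Variables (E : {set edg}) (A : {set 'I_p}) (At : {set edg}).
Hypothesis hv : valid E A At.

Lemma at_tw e : e \in At -> tE e \in E -> tE e \in At.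
Proof.
case: hv => hF hAt _ hE => ea teE.
apply/negPn/negP => na.
have [_ k _] := hE _ teE na.
by move: k; rewrite tauEK ?ea // (subsetP hF) // (subsetP hAt).
Qed.

Lemma EEin e : (e \in EEf E At) = [&& e \in FL tau, e \in At & tE e \in At].
Proof.
case: hv => hF hAt _ hE.
rewrite /EEf in_set in_setI in_setI.
case: (boolP (e \in FL tau)) => eL; rewrite ?andbF //=.
have eF := FL_FV eL.
case: (boolP (e \in At)) => ea; rewrite ?andbF ?andbT //=.
rewrite (subsetP hAt _ ea) /=.
apply/imsetP/idP.
  move=> [x]; rewrite in_setI => /andP [xE xR] hex.
  by apply: (at_tw ea); rewrite hex tauEK ?(subsetP hF).
move=> ta; exists (tE e); last by rewrite tauEK.
by rewrite in_setI (subsetP hAt _ ta) -FL_FR.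
Qed.

Lemma At_dec e : (e \in At) =
  (e \in E) && [|| tE e == e, tE e \notin E, e \in EEf E At | tE e \in EEf E At].
Proof.
have hv' := hv; case: hv' => hF hAt _ hE.
rewrite !EEin.
apply/idP/idP.
  move=> ea; rewrite (subsetP hAt _ ea) /=.
  case: eqP => //= hne; case: (boolP (tE e \in E)) => //= teE.
  have ta := at_tw ea teE.
  have eF := subsetP hF _ (subsetP hAt _ ea).
  rewrite tauEK // ea ta /=.
  by have := FL_or eF (introN eqP hne); case/orP => ->; rewrite ?orbT.
case/andP => eE; apply: contraLR => ea.
have [k1 k2 k3] := hE e eE ea.
by rewrite tauEK ?(subsetP hF) // (negbTE k3) k1 (negbTE k2) (negbTE ea) /= !andbF.
Qed.

Lemma A_dec i : (i \in A) = ((i < q) && (i \in A)) || ((tau i < q) && (tau i \in A)).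
Proof.
case: hv => _ _ hA _.
rewrite LRq; case: (ltnP i q) => hi /=.
  by rewrite orbF.
by apply/idP/idP => [/hA|/hA]; rewrite ?tau_inv.
Qed.

End V.

Lemma quad_inj t1 t2 : validT t1 -> validT t2 -> quadT t1 = quadT t2 -> t1 = t2.
Proof.
case: t1 t2 => [[E1 A1] At1] [[E2 A2] At2]; rewrite /validT /quadT /= => h1 h2 [eE eL eEE].
subst E2.
have eA : A1 = A2.
  apply/setP => i; rewrite (A_dec h1) (A_dec h2).
  move/setP: eL => eL; have := eL i; have := eL (tau i).
  by rewrite !inE => -> ->.
subst A2; congr (_, _, _).
apply/setP => e; rewrite (At_dec h1) (At_dec h2) eEE //.
Qed.


Section V2.
Variables (E : {set edg}) (A : {set 'I_p}) (At : {set edg}).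
Hypothesis hv : valid E A At.
Let LL := [set i : 'I_p | (i < q) && (i \in A)].

Lemma quad_S1 (j : 'I_p) : j < q -> quadT (E, A :\: [set j; tau j], At) = (E, LL :\ j, EEf E At).
Proof.
move=> hj; rewrite /quadT /=; congr (_, _, _); apply/setP => k.
rewrite !inE; case: (eqVneq k (tau j)) => [->|hk].
  by rewrite LRq leqNgt hj /= andbF.
by rewrite orbF; case: (k == j); case: (k < q).
Qed.

Lemma quad_S2 e : e \in E -> validT (E :\ e, A, At :\ e) ->
  quadT (E :\ e, A, At :\ e) = (E :\ e, LL, EEf E At :\: [set e; tE e]).
Proof.
move=> eE hF; rewrite /quadT /=; congr (_, _, _); apply/setP => x.
have eF : e \in FV p by case: hv => h1 _ _ _; apply: (subsetP h1).
rewrite in_setD (EEin hF) (EEin hv) !in_setD1 in_set2.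
case: (boolP (x \in FL tau)) => xL; rewrite ?andbF //=.
have xF := FL_FV xL.
rewrite (tE_eq xF eF).
by case: (x == e); case: (x == tE e); case: (x \in At); case: (tE x \in At).
Qed.


Lemma quad_S3 e : validT (E :\: [set e; tE e], A, At) ->
  quadT (E :\: [set e; tE e], A, At) = (E :\: [set e; tE e], LL, EEf E At).
Proof.
move=> hF; rewrite /quadT /=; congr (_, _, _); apply/setP => x.
by rewrite (EEin hF) (EEin hv).
Qed.

Lemma quad_S4 e : e \in FV p -> validT (E, A, At :\: [set e; tE e]) ->
  quadT (E, A, At :\: [set e; tE e]) = (E, LL, EEf E At :\: [set e; tE e]).
Proof.
move=> eF hF; rewrite /quadT /=; congr (_, _, _); apply/setP => x.
rewrite in_setD (EEin hF) (EEin hv) !in_setD.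
case: (boolP (x \in FL tau)) => xL; rewrite ?andbF //=.
have xF := FL_FV xL.
rewrite (tE_in2 (subxx _) eF xF).
by case: (x \in [set e; tE e]); case: (x \in At); case: (tE x \in At).
Qed.
End V2.

Lemma setD1_nin (T : finType) (S : {set T}) a : a \notin S -> S :\ a = S.
Proof.
by move=> h; apply/setP => x; rewrite !inE; case: eqVneq => // ->; rewrite (negbTE h).
Qed.

Lemma setD2_l (T : finType) (S : {set T}) a b : a \notin S -> S :\: [set a; b] = S :\ b.
Proof.
move=> h; apply/setP => x; rewrite !inE; case: (eqVneq x a) => [->|] /=.
  by rewrite (negbTE h) !andbF.
by [].
Qed.

Lemma setD2_r (T : finType) (S : {set T}) a b : b \notin S -> S :\: [set a; b] = S :\ a.
Proof. by move=> h; rewrite setUC; apply: setD2_l. Qed.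

Lemma setD2_nin (T : finType) (S : {set T}) a b : a \notin S -> b \notin S -> S :\: [set a; b] = S.
Proof. by move=> h1 h2; rewrite setD2_l // setD1_nin. Qed.


Section V3.
Variables (E : {set edg}) (A : {set 'I_p}) (At : {set edg}).
Hypothesis hv : valid E A At.

Lemma D2 F : stepT E A At F -> neighbour_quad tau (quadT F) (quadT (E, A, At)).
Proof.
move=> hs; have [hFv _ _] := step_valid hv hs.
have hv' := hv; case: hv' => hF hAt hA hE.
rewrite /neighbour_quad /=.
case: hs => [[i ia eF]|[[e /andP [ea te] eF]|[[e /setDP [eE ea] eF]|[e /and3P [ea tea tee] eF]]]]; subst F.
- case: (ltnP i q) => hi.
    left; exists i; first by rewrite inE hi ia.
    exact: quad_S1.
  left; exists (tau i); first by rewrite inE LRq hi hA.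
  rewrite -quad_S1 ?LRq //.
  by rewrite tau_inv setUC.
- have eE := subsetP hAt e ea; have eF := subsetP hF e eE.
  rewrite (quad_S2 hv eE hFv).
  case: (eqVneq (tE e) e) => hfix.
    have he := tE_fix eF hfix.
    right; right; right; right; right; left; exists e.1; first by rewrite -he.
    have nEE : e \notin EEf E At.
      rewrite (EEin hv); apply/negP => /and3P [eL _ _].
      by have := FL_tE eL; rewrite hfix eL.
    by rewrite -he hfix setD2_nin.
  case: (boolP (tE e \in E)) => teE; last first.
    right; right; right; right; left; exists e; first by rewrite eE teE.
    rewrite setD2_nin //.
      rewrite (EEin hv); apply/negP => /and3P [_ _ ta].
      by move: teE; rewrite (subsetP hAt _ ta).
    rewrite (EEin hv); apply/negP => /and3P [_ ta _].
    by move: teE; rewrite (subsetP hAt _ ta).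
  have ta : tE e \in At by move: te; rewrite in_setD teE andbT negbK.
  case/orP: (FL_or eF hfix) => L.
    right; right; left; exists e; first by rewrite (EEin hv) L ea ta.
    rewrite setD2_r //.
    by rewrite (EEin hv); apply/negP => /and3P [tL _ _]; move: (FL_tE L); rewrite tL.
  right; right; right; left; exists (tE e); first by rewrite (EEin hv) L ta tauEK.
  rewrite tauEK // setD2_l //.
  rewrite (EEin hv); apply/negP => /and3P [eL _ _]; move: (FL_tE L).
  by rewrite tauEK // eL.
- rewrite (quad_S3 hv hFv).
  have [k1 k2 k3] := hE e eE ea.
  right; right; right; right; right; right; exists e => //.
  rewrite eE k1 eq_sym k3 !(EEin hv) (negbTE ea) (negbTE k2) /=.
  by rewrite !andbF.
- have eE := subsetP hAt e ea; have eF := subsetP hF e eE.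
  rewrite (quad_S4 hv eF hFv).
  case/orP: (FL_or eF tee) => L.
    right; left; exists e; first by rewrite (EEin hv) L ea tea.
    rewrite setD2_r //.
    by rewrite (EEin hv); apply/negP => /and3P [tL _ _]; move: (FL_tE L); rewrite tL.
  right; left; exists (tE e); first by rewrite (EEin hv) L tea tauEK.
  rewrite setD2_l //.
  rewrite (EEin hv); apply/negP => /and3P [eL _ _]; move: (FL_tE L).
  by rewrite tauEK // eL.
Qed.

Lemma D1 Q : neighbour_quad tau Q (quadT (E, A, At)) ->
  exists2 F, stepT E A At F & quadT F = Q.
Proof.
have hv' := hv; case: hv' => hF hAt hA hE.
rewrite /neighbour_quad /=.
case => [[j jL ->]|[[e eEE ->]|[[e eEE ->]|[[e eEE ->]|[[e /andP [eE teE] ->]|[[i iE ->]|[e /and5P [eE teE ene eEE teEE] ->]]]]]]].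
- move: jL; rewrite inE => /andP [jq ja].
  exists (E, A :\: [set j; tau j], At); first by left; exists j.
  exact: quad_S1.
- move: (eEE); rewrite (EEin hv) => /and3P [eL ea ta].
  have eF := FL_FV eL.
  have tee : tE e != e by apply/eqP => h; move: (FL_tE eL); rewrite h eL.
  have hs : stepT E A At (E, A, At :\: [set e; tE e]).
    by right; right; right; exists e => //; rewrite ea ta tee.
  exists (E, A, At :\: [set e; tE e]) => //.
  have [hFv _ _] := step_valid hv hs.
  rewrite (quad_S4 hv eF hFv) setD2_r //.
  by rewrite (EEin hv); apply/negP => /and3P [tL _ _]; move: (FL_tE eL); rewrite tL.
- move: (eEE); rewrite (EEin hv) => /and3P [eL ea ta].
  have eE := subsetP hAt e ea.
  have hs : stepT E A At (E :\ e, A, At :\ e).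
    by right; left; exists e => //; rewrite ea in_setD ta.
  exists (E :\ e, A, At :\ e) => //.
  have [hFv _ _] := step_valid hv hs.
  rewrite (quad_S2 hv eE hFv) setD2_r //.
  by rewrite (EEin hv); apply/negP => /and3P [tL _ _]; move: (FL_tE eL); rewrite tL.
- move: (eEE); rewrite (EEin hv) => /and3P [eL ea ta].
  have eF := FL_FV eL.
  have teE := subsetP hAt _ ta.
  have hs : stepT E A At (E :\ tE e, A, At :\ tE e).
    by right; left; exists (tE e) => //; rewrite ta in_setD tauEK // ea.
  exists (E :\ tE e, A, At :\ tE e) => //.
  have [hFv _ _] := step_valid hv hs.
  rewrite (quad_S2 hv teE hFv) tauEK // setD2_l //.
  by rewrite (EEin hv); apply/negP => /and3P [tL _ _]; move: (FL_tE eL); rewrite tL.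
- have ea : e \in At.
    apply/negPn/negP => na; have [k1 _ _] := hE e eE na.
    by move: teE; rewrite k1.
  have hs : stepT E A At (E :\ e, A, At :\ e).
    by right; left; exists e => //; rewrite ea in_setD (negbTE teE) andbF.
  exists (E :\ e, A, At :\ e) => //.
  have [hFv _ _] := step_valid hv hs.
  rewrite (quad_S2 hv eE hFv) setD2_nin //.
    rewrite (EEin hv); apply/negP => /and3P [_ _ ta].
    by move: teE; rewrite (subsetP hAt _ ta).
  rewrite (EEin hv); apply/negP => /and3P [_ ta _].
  by move: teE; rewrite (subsetP hAt _ ta).
- set e := (i, tau i) in iE *.
  have eF := subsetP hF e iE.
  have hfix : tE e = e := tE_pair eF.
  have ea : e \in At.
    apply/negPn/negP => na; have [_ _ k3] := hE e iE na.
    by move: k3; rewrite hfix eqxx.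
  have hs : stepT E A At (E :\ e, A, At :\ e).
    by right; left; exists e => //; rewrite ea in_setD hfix ea.
  exists (E :\ e, A, At :\ e) => //.
  have [hFv _ _] := step_valid hv hs.
  have nEE : e \notin EEf E At.
    rewrite (EEin hv); apply/negP => /and3P [eL _ _].
    by have := FL_tE eL; rewrite hfix eL.
  by rewrite (quad_S2 hv iE hFv) hfix setD2_nin.
- have eF := subsetP hF e eE.
  have ea : e \notin At.
    apply/negP => ea; have ta := at_tw hv ea teE.
    have tee : tE e != e by rewrite eq_sym.
    case/orP: (FL_or eF tee) => L.
      by move: eEE; rewrite (EEin hv) L ea ta.
    by move: teEE; rewrite (EEin hv) L ta tauEK // ea.
  exists (E :\: [set e; tE e], A, At); first by right; right; left; exists e => //; rewrite inE ea.
  have hs : stepT E A At (E :\: [set e; tE e], A, At).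
    by right; right; left; exists e => //; rewrite inE ea.
  have [hFv _ _] := step_valid hv hs.
  by rewrite (quad_S3 hv hFv).
Qed.

End V3.


Lemma leT_refl t : leT t t.
Proof. by split. Qed.

Definition trip (G : cgraph p) : quadruplet p := (Eset G, cA G, cAt G).

Lemma sub_trip (H G : cgraph p) : is_pdCG tau H -> is_pdCG tau G ->
  (sub_model H G <-> leT (trip H) (trip G)).
Proof. by move=> hH hG; rewrite sub_model_iff. Qed.

Lemma realizeT F : validT F -> exists F' : cgraph p, is_pdCG tau F' /\ trip F' = F.
Proof.
case: F => [[E A] At] hv.
have [F' [h1 h2 h3 h4]] := realize hv.
by exists F'; split => //; rewrite /trip h2 h3 h4.
Qed.

Lemma main_part1 (H G : cgraph p) : is_pdCG tau H -> is_pdCG tau G ->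
  (covered tau H G <-> neighbour_quad tau (quad tau q H) (quad tau q G)).
Proof.
move=> hH hG.
have vH : validT (trip H) := pd_valid hH.
have vG : valid (Eset G) (cA G) (cAt G) := pd_valid hG.
rewrite !quad_trip.
split.
- move=> [[sHG nGH] nomid].
  have lHG : leT (trip H) (trip G) by apply/sub_trip.
  have ne : trip H != (Eset G, cA G, cAt G).
    apply/eqP => e; apply: nGH; apply/sub_trip => //; rewrite /trip -e; exact: leT_refl.
  have [F [hs lHF]] := step_exists vG vH lHG ne.
  have [vF lFG neFG] := step_valid vG hs.
  case: (eqVneq F (trip H)) => [eF|neF].
    by rewrite -/(trip H) -eF; apply: D2.
  exfalso; apply: nomid.
  have [F' [pF tF]] := realizeT vF.
  exists F'; split => //; split.
    split; first by apply/sub_trip => //; rewrite tF.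
    move/(sub_trip pF hH); rewrite tF => lFH.
    by move: neF; rewrite (leT_anti lFH lHF) eqxx.
  split; first by apply/sub_trip => //; rewrite tF.
  move/(sub_trip hG pF); rewrite tF => lGF.
  by move: neFG; rewrite (leT_anti lFG lGF) eqxx.
- move=> hn.
  have [F hs hq] := D1 vG hn.
  have [vF lFG neFG] := step_valid vG hs.
  have eF : trip H = F by apply: quad_inj => //; rewrite hq.
  split.
    split; first by apply/sub_trip => //; rewrite eF.
    move/(sub_trip hG hH); rewrite eF => lGF.
    by move: neFG; rewrite (leT_anti lFG lGF) eqxx.
  move=> [K [pK [[sHK nKH] [sKG nGK]]]].
  have vK : validT (trip K) := pd_valid pK.
  have lFK : leT F (trip K) by rewrite -eF; apply/sub_trip.
  have lKG : leT (trip K) (Eset G, cA G, cAt G) by apply/sub_trip.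
  case: (step_between vG hs vK lFK lKG) => eK.
    by apply: nKH; apply/sub_trip => //; rewrite eK eF; exact: leT_refl.
  by apply: nGK; apply/sub_trip => //; rewrite eK; exact: leT_refl.
Qed.

Lemma main_part2 (G : cgraph p) : is_pdCG tau G ->
  forall Q : quadruplet p, neighbour_quad tau Q (quad tau q G) ->
     exists H : cgraph p, is_pdCG tau H /\ quad tau q H = Q.
Proof.
move=> hG Q; rewrite quad_trip => hn.
have vG : valid (Eset G) (cA G) (cAt G) := pd_valid hG.
have [F hs hq] := D1 vG hn.
have [vF _ _] := step_valid vG hs.
have [F' [pF tF]] := realizeT vF.
by exists F'; split => //; rewrite quad_trip -hq -tF.
Qed.

End S.

Theorem proposition8 (p q : nat) (tau : 'I_p -> 'I_p)
  (tau_inv : forall i, tau (tau i) = i)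
  (tau_nofix : forall i, tau i != i)
  (tau_LR : tau @: [set i : 'I_p | (i < q)%N] = [set i : 'I_p | (q <= i)%N])
  (G : cgraph p) (HG : is_pdCG tau G) :
  (forall H : cgraph p, is_pdCG tau H ->
     (covered tau H G <-> neighbour_quad tau (quad tau q H) (quad tau q G)))
  /\
  (forall Q : quadruplet p, neighbour_quad tau Q (quad tau q G) ->
     exists H : cgraph p, is_pdCG tau H /\ quad tau q H = Q).
Proof.
split.
  by move=> H hH; apply: (main_part1 tau_inv tau_nofix tau_LR).
exact: (main_part2 tau_inv tau_nofix tau_LR).
Qed.
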